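(* Let $\lambda\in(1/2,1)$ and set $\rho=\lambda\Phi_1+(1-\lambda)|01\rangle\langle01|$ and $\sigma=\lambda\Phi_1+(1-\lambda)\Phi_2$. Then there exists no non-entangling map $\Lambda:\mathcal{D}\to\mathcal{D}$ such that $\Lambda(\rho)=\sigma$.
   Context: $\mathcal{D}$ is the set of two-qubit density matrices on $\mathbb{C}^2\otimes\mathbb{C}^2$ (Hermitian, positive semidefinite, trace one $4\times4$ matrices), written in the computational basis $\{|ij\rangle\}_{i,j\in\{0,1\}}$. The Bell vectors are $|\Phi_1\rangle=\frac{1}{\sqrt2}(|00\rangle+|11\rangle)$, $|\Phi_2\rangle=\frac{1}{\sqrt2}(|00\rangle-|11\rangle)$, and $\Phi_i=|\Phi_i\rangle\langle\Phi_i|$. (These are the states $\rho_{\vec\lambda}=\lambda_1\Phi_1+\lambda_2|01\rangle\langle01|+\lambda_3\Phi_2+\lambda_4|10\rangle\langle10|$ and $\sigma_{\vec\lambda}=\sum_j\lambda_j\Phi_j$, with $|\Phi_3\rangle=\frac{1}{\sqrt2}(|10\rangle+|01\rangle)$, $|\Phi_4\rangle=\frac{1}{\sqrt2}(|10\rangle-|01\rangle)$, for $\vec\lambda=(\lambda,1-\lambda,0,0)$.) A state is separable if it is a convex combination of product states $|\phi\rangle\langle\phi|\otimes|\chi\rangle\langle\chi|$. A map $\Lambda:\mathcal{D}\to\mathcal{D}$ is non-entangling (NE) if it is completely positive and trace preserving and maps every separable state to a separable state. *)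

(* Defs.v *)
From HB Require Import structures.
From mathcomp Require Import all_boot all_order all_algebra.
From mathcomp Require Import reals complex.
Set Implicit Arguments. Unset Strict Implicit. Unset Printing Implicit Defensive.
Import Order.TTheory GRing.Theory Num.Theory.
Local Open Scope ring_scope.
Local Open Scope complex_scope.

Section QuantumDefs.
Variable R : realType.
Local Notation C := R[i].

Definition adj m n (A : 'M[C]_(m, n)) : 'M[C]_(n, m) := (map_mx (fun x => x^*) A)^T.

Definition hermitian n (A : 'M[C]_n) : Prop := adj A = A.

(* positive semidefinite: Hermitian with nonnegative quadratic form
   (0 <= z in C means z is real and nonnegative) *)
Definition psd n (A : 'M[C]_n) : Prop :=
  hermitian A /\ forall v : 'cV[C]_n, 0 <= (adj v *m A *m v) 0 0.

(* two-qubit density matrices, computational basis |00>,|01>,|10>,|11> = 0,1,2,3 *)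
Definition density (A : 'M[C]_4) : Prop := psd A /\ \tr A = 1.

Definition proj n (v : 'cV[C]_n) : 'M[C]_n := v *m adj v.
Definition unit_vec n (v : 'cV[C]_n) : Prop := (adj v *m v) 0 0 = 1.

(* tensor product of qubit vectors: (u (x) v)_{|ij>} = u_i v_j, |ij> has index 2i+j *)
Definition kronv (u v : 'cV[C]_2) : 'cV[C]_4 :=
  \col_(k < 4) (u (inord (k %/ 2)) 0 * v (inord (k %% 2)) 0).

(* separable: finite convex combination of product pure states
   |phi><phi| (x) |chi><chi| = |phi (x) chi><phi (x) chi| *)
Definition separable (A : 'M[C]_4) : Prop :=
  exists (n : nat) (p : 'I_n -> R) (phi chi : 'I_n -> 'cV[C]_2),
    [/\ forall k, 0 <= p k,
        \sum_(k < n) p k = 1,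
        forall k, unit_vec (phi k) /\ unit_vec (chi k)
      & A = \sum_(k < n) (p k)%:C *: proj (kronv (phi k) (chi k))].

(* a 4n x 4n matrix given by its n x n array of 4x4 blocks X a b is PSD *)
Definition block_psd n (X : 'I_n -> 'I_n -> 'M[C]_4) : Prop :=
  (forall a b, X b a = adj (X a b)) /\
  forall v : 'I_n -> 'cV[C]_4,
    0 <= \sum_(a < n) \sum_(b < n) (adj (v a) *m X a b *m v b) 0 0.

(* complete positivity: id_n (x) L is positive for every n *)
Definition completely_positive (L : 'M[C]_4 -> 'M[C]_4) : Prop :=
  forall n (X : 'I_n -> 'I_n -> 'M[C]_4),
    block_psd X -> block_psd (fun a b => L (X a b)).

Definition trace_preserving (L : 'M[C]_4 -> 'M[C]_4) : Prop :=
  forall A, \tr (L A) = \tr A.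

Definition non_entangling (L : {linear 'M[C]_4 -> 'M[C]_4}) : Prop :=
  [/\ completely_positive L, trace_preserving L &
      forall A, density A -> separable A -> separable (L A)].

Definition ket (k : 'I_4) : 'cV[C]_4 := delta_mx k 0.
Definition invsqrt2 : C := ((Num.sqrt (2 : R))^-1)%:C.
Definition Phi1v : 'cV[C]_4 := invsqrt2 *: (ket 0 + ket 3).
Definition Phi2v : 'cV[C]_4 := invsqrt2 *: (ket 0 - ket 3).
Definition Phi1 : 'M[C]_4 := proj Phi1v.
Definition Phi2 : 'M[C]_4 := proj Phi2v.

Definition rho_state (lam : R) : 'M[C]_4 :=
  lam%:C *: Phi1 + (1 - lam)%:C *: proj (ket 1).
Definition sigma_state (lam : R) : 'M[C]_4 :=
  lam%:C *: Phi1 + (1 - lam)%:C *: Phi2.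

End QuantumDefs.

(* Main.v *)
Require Import Defs.
From HB Require Import structures.
From mathcomp Require Import all_boot all_order all_algebra.
From mathcomp Require Import reals complex.
From mathcomp Require Import ring lra.
Import Order.TTheory GRing.Theory Num.Theory.
Local Open Scope ring_scope.
Local Open Scope complex_scope.
Section S.
Variable R : realType.
Local Notation C := R[i].
Local Notation RE := (@complex.Re R).
Local Notation IM := (@complex.Im R).

Lemma REM (x y : C) : RE (x * y) = RE x * RE y - IM x * IM y.
Proof. by case: x => a b; case: y => c d. Qed.
Lemma IMM (x y : C) : IM (x * y) = RE x * IM y + IM x * RE y.
Proof. by case: x => a b; case: y => c d. Qed.
Lemma RED (x y : C) : RE (x + y) = RE x + RE y.
Proof. by case: x => a b; case: y => c d. Qed.
Lemma RE0 : RE 0 = 0. Proof. by []. Qed.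
Lemma RE_sum (I : Type) (r : seq I) (P : pred I) (F : I -> C) :
  RE (\sum_(i <- r | P i) F i) = \sum_(i <- r | P i) RE (F i).
Proof. exact: (big_morph _ RED RE0). Qed.
Lemma REC (x : R) : RE x%:C = x. Proof. by []. Qed.
Lemma IMC (x : R) : IM x%:C = 0. Proof. by []. Qed.
Lemma numJ (x : C) : Num.conj x = conjc x. Proof. by []. Qed.
Lemma REJ (x : C) : RE (conjc x) = RE x. Proof. by case: x. Qed.
Lemma IMJ (x : C) : IM (conjc x) = - IM x. Proof. by case: x. Qed.

Lemma ord4P (P : 'I_4 -> Prop) : P 0 -> P 1 -> P 2 -> P 3 -> forall i, P i.
Proof.
move=> P0 P1 P2 P3 [[|[|[|[|n]]]] Hn] //.
- by have -> : Ordinal Hn = 0 by apply/val_inj.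
- by have -> : Ordinal Hn = 1 by apply/val_inj.
- by have -> : Ordinal Hn = 2 by apply/val_inj.
- by have -> : Ordinal Hn = 3 by apply/val_inj.
Qed.

Lemma sum4 (F : 'I_4 -> C) : \sum_(k < 4) F k = F 0 + F 1 + F 2 + F 3.
Proof.
rewrite !big_ord_recr big_ord0 /= add0r.
by congr (F _ + F _ + F _ + F _); apply/val_inj.
Qed.
Lemma sum2 (F : 'I_2 -> C) : \sum_(k < 2) F k = F 0 + F 1.
Proof.
rewrite !big_ord_recr big_ord0 /= add0r.
by congr (F _ + F _); apply/val_inj.
Qed.

Lemma adjE m n (A : 'M[C]_(m, n)) i j : adj A i j = (conjc (A j i)).
Proof. by rewrite /adj !mxE. Qed.
Lemma projE n (v : 'cV[C]_n) i j : proj v i j = v i 0 * (conjc (v j 0)).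
Proof. by rewrite /proj !mxE big_ord1 adjE. Qed.

Lemma kron0 (a b : 'cV[C]_2) : kronv a b 0 0 = a 0 0 * b 0 0.
Proof. rewrite /kronv mxE. congr (a _ _ * b _ _); apply/val_inj; rewrite /= inordK //. Qed.
Lemma kron1 (a b : 'cV[C]_2) : kronv a b 1 0 = a 0 0 * b 1 0.
Proof. rewrite /kronv mxE. congr (a _ _ * b _ _); apply/val_inj; rewrite /= inordK //. Qed.
Lemma kron2 (a b : 'cV[C]_2) : kronv a b 2 0 = a 1 0 * b 0 0.
Proof. rewrite /kronv mxE. congr (a _ _ * b _ _); apply/val_inj; rewrite /= inordK //. Qed.
Lemma kron3 (a b : 'cV[C]_2) : kronv a b 3 0 = a 1 0 * b 1 0.
Proof. rewrite /kronv mxE. congr (a _ _ * b _ _); apply/val_inj; rewrite /= inordK //. Qed.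

Lemma ketE (k i : 'I_4) : ket R k i 0 = (i == k)%:R.
Proof. by rewrite /ket mxE eqxx andbT. Qed.

Lemma adj_mul m n p (A : 'M[C]_(m, n)) (B : 'M[C]_(n, p)) :
  adj (A *m B) = adj B *m adj A.
Proof.
apply/matrixP => i j; rewrite adjE !mxE rmorph_sum; apply: eq_bigr => k _.
by rewrite !adjE rmorphM mulrC.
Qed.
Lemma adjK m n (A : 'M[C]_(m, n)) : adj (adj A) = A.
Proof. by apply/matrixP => i j; rewrite !adjE conjcK. Qed.

Lemma proj_psd n (v : 'cV[C]_n) : psd (proj v).
Proof.
split.
  by rewrite /Defs.hermitian /proj adj_mul adjK.
move=> w; rewrite /proj mulmxA -(mulmxA _ (adj v)).
rewrite -[adj v *m w]adjK adj_mul adjK.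
set X := adj w *m v.
rewrite mxE big_ord1 adjE.
exact: mulcJ_ge0.
Qed.

Lemma key (a0 a1 b0 b1 : C) :
  2 * RE (a0*b0*(conjc (a1*b1))) <= RE (a0*b1*(conjc (a0*b1))) + RE (a1*b0*(conjc (a1*b0))) /\
  - (2 * RE (a0*b0*(conjc (a1*b1)))) <= RE (a0*b1*(conjc (a0*b1))) + RE (a1*b0*(conjc (a1*b0))).
Proof.
case: a0 => x0 y0; case: a1 => x1 y1; case: b0 => u0 v0; case: b1 => u1 v1 /=.
set Pr := x0*u1 + y0*v1. set Pi := y0*u1 - x0*v1.
set Qr := x1*u0 + y1*v0. set Qi := y1*u0 - x1*v0.
split.
- have H : 0 <= (Pr - Qr)^+2 + (Pi - Qi)^+2 by rewrite addr_ge0 // sqr_ge0.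
  move: H; rewrite /Pr /Pi /Qr /Qi => H. lra.
- have H : 0 <= (Pr + Qr)^+2 + (Pi + Qi)^+2 by rewrite addr_ge0 // sqr_ge0.
  move: H; rewrite /Pr /Pi /Qr /Qi => H. nra.
Qed.

Lemma REmulC (p : R) (z : C) : RE (p%:C * z) = p * RE z.
Proof. by rewrite REM REC IMC mul0r subr0. Qed.
Lemma REnorm (z : C) : RE (z * (conjc z)) = RE z ^+ 2 + IM z ^+ 2.
Proof. by rewrite REM REJ IMJ; ring. Qed.

Lemma sumE n (p : 'I_n -> R) (M : 'I_n -> 'M[C]_4) i j :
  (\sum_(k < n) (p k)%:C *: M k) i j = \sum_(k < n) (p k)%:C * M k i j.
Proof. by rewrite summxE; apply: eq_bigr => k _; rewrite mxE. Qed.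

Lemma sep_props (Z : 'M[C]_4) : separable Z ->
  [/\ forall i, 0 <= RE (Z i i),
      2 * RE (Z 0 3) <= RE (Z 1 1) + RE (Z 2 2) &
      - (2 * RE (Z 0 3)) <= RE (Z 1 1) + RE (Z 2 2)].
Proof.
case=> n [p [phi [chi [Hp _ _ ->]]]].
split; [move=> i| |]; rewrite !sumE !RE_sum.
- apply: sumr_ge0 => k _.
  by rewrite REmulC projE REnorm mulr_ge0 // addr_ge0 // sqr_ge0.
- rewrite -big_split mulr_sumr /=; apply: ler_sum => k _.
  rewrite !REmulC !projE !kron0 !kron1 !kron2 !kron3 mulrCA -mulrDr.
  apply: ler_wpM2l => //.
  by case: (key (phi k 0 0) (phi k 1 0) (chi k 0 0) (chi k 1 0)).
- rewrite -big_split mulr_sumr -sumrN /=; apply: ler_sum => k _.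
  rewrite !REmulC !projE !kron0 !kron1 !kron2 !kron3 mulrCA -mulrN -mulrDr.
  apply: ler_wpM2l => //.
  by case: (key (phi k 0 0) (phi k 1 0) (chi k 0 0) (chi k 1 0)).
Qed.

Lemma unitE2 (a : 'cV[C]_2) : unit_vec a <-> (conjc (a 0 0)) * a 0 0 + (conjc (a 1 0)) * a 1 0 = 1.
Proof. by rewrite /unit_vec mxE sum2 !adjE. Qed.

Lemma tr_proj n (v : 'cV[C]_n) : \tr (proj v) = (adj v *m v) 0 0.
Proof. by rewrite /proj mxtrace_mulC /mxtrace big_ord1. Qed.

Lemma prod_state (a b : 'cV[C]_2) : unit_vec a -> unit_vec b ->
  density (proj (kronv a b)) /\ separable (proj (kronv a b)).
Proof.
move=> ua ub; split.
  split; first exact: proj_psd.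
  rewrite tr_proj mxE sum4 !adjE !kron0 !kron1 !kron2 !kron3 !rmorphM.
  move/unitE2: ua => ua; move/unitE2: ub => ub.
  transitivity (((conjc (a 0 0)) * a 0 0 + (conjc (a 1 0)) * a 1 0) * ((conjc (b 0 0)) * b 0 0 + (conjc (b 1 0)) * b 1 0)); first by ring.
  by rewrite ua ub mulr1.
exists 1%N, (fun _ => 1), (fun _ => a), (fun _ => b); split => //.
- by rewrite big_ord1.
- rewrite big_ord1; have -> : (1:R)%:C = 1 by [].
  by rewrite scale1r.
Qed.

Lemma IMD (x y : C) : IM (x + y) = IM x + IM y.
Proof. by case: x => a b; case: y => c d. Qed.
Lemma REN (x : C) : RE (- x) = - RE x. Proof. by case: x. Qed.
Lemma IMN (x : C) : IM (- x) = - IM x. Proof. by case: x. Qed.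
Lemma REi : RE 'i = 0. Proof. by []. Qed.
Lemma IMi : IM 'i = 1. Proof. by []. Qed.
Lemma RE1 : RE 1 = 1. Proof. by []. Qed.
Lemma IM1 : IM 1 = 0. Proof. by []. Qed.
Lemma IM0 : IM 0 = 0. Proof. by []. Qed.
Lemma cext (x y : C) : RE x = RE y -> IM x = IM y -> x = y.
Proof. by case: x => a b; case: y => c d /= -> ->. Qed.

Definition vec2 (x y : C) : 'cV[C]_2 := \col_(k < 2) (if (k : nat) == 0%N then x else y).
Lemma vec2_0 x y : vec2 x y 0 0 = x. Proof. by rewrite mxE. Qed.
Lemma vec2_1 x y : vec2 x y 1 0 = y. Proof. by rewrite mxE. Qed.

Lemma ket1E : ket R 1 = kronv (vec2 1 0) (vec2 0 1).
Proof.
apply/matrixP => i j; rewrite (ord1 j) ketE.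
elim/ord4P: i; rewrite ?kron0 ?kron1 ?kron2 ?kron3 ?vec2_0 ?vec2_1 /=;
  by rewrite ?mulr0 ?mul0r ?mulr1.
Qed.
Lemma ket2E : ket R 2 = kronv (vec2 0 1) (vec2 1 0).
Proof.
apply/matrixP => i j; rewrite (ord1 j) ketE.
elim/ord4P: i; rewrite ?kron0 ?kron1 ?kron2 ?kron3 ?vec2_0 ?vec2_1 /=;
  by rewrite ?mulr0 ?mul0r ?mulr1.
Qed.
Ltac csimp := rewrite ?numJ ?(REM, IMM, RED, IMD, REN, IMN, REJ, IMJ, REC, IMC, REi, IMi, RE1, IM1, RE0, IM0).
Lemma unit10 : unit_vec (vec2 1 0).
Proof. rewrite unitE2 vec2_0 vec2_1; apply: cext; csimp; ring. Qed.
Lemma unit01 : unit_vec (vec2 0 1).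
Proof. rewrite unitE2 vec2_0 vec2_1; apply: cext; csimp; ring. Qed.

Lemma invsqrt2_sq : invsqrt2 R * (conjc (invsqrt2 R)) = (2^-1)%:C.
Proof.
apply: cext; rewrite /invsqrt2; csimp; last by ring.
rewrite oppr0 mulr0 subr0 -expr2 exprVn sqr_sqrtr // ler0n.
Qed.

Lemma natJ (b : bool) : (conjc (b%:R : C)) = b%:R.
Proof. by case: b; apply: cext; csimp; rewrite ?oppr0. Qed.
Lemma cJM (x y : C) : (conjc (x * y)) = (conjc x) * (conjc y).
Proof. apply: cext; csimp; ring. Qed.
Lemma cJD (x y : C) : (conjc (x + y)) = (conjc x) + (conjc y).
Proof. apply: cext; csimp; ring. Qed.
Lemma cJN (x : C) : (conjc (- x)) = - (conjc x).
Proof. apply: cext; csimp; ring. Qed.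
Lemma cJB (x y : C) : (conjc (x - y)) = (conjc x) - (conjc y).
Proof. apply: cext; csimp; ring. Qed.

Lemma Phi1E i j : Phi1 R i j =
  (2^-1)%:C * (((i == 0)%:R + (i == 3)%:R) * ((j == 0)%:R + (j == 3)%:R)).
Proof.
Abort.
Lemma Phi1E i j : Phi1 R i j =
  (2^-1)%:C * (((i == 0)%:R + (i == 3)%:R) * ((j == 0)%:R + (j == 3)%:R)).
Proof.
rewrite /Phi1 projE /Phi1v !mxE !eqxx !andbT ?numJ cJM cJD !natJ -invsqrt2_sq.
ring.
Qed.
Lemma Phi2E i j : Phi2 R i j =
  (2^-1)%:C * (((i == 0)%:R - (i == 3)%:R) * ((j == 0)%:R - (j == 3)%:R)).
Proof.
rewrite /Phi2 projE /Phi2v !mxE !eqxx !andbT ?numJ cJM cJB !natJ -invsqrt2_sq.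
ring.
Qed.
Lemma addE (A B : 'M[C]_4) i j : (A + B) i j = A i j + B i j.
Proof. by rewrite mxE. Qed.
Lemma scaleE (x : C) (A : 'M[C]_4) i j : (x *: A) i j = x * A i j.
Proof. by rewrite mxE. Qed.
Lemma ne01 : (((0 : 'I_4) == 1) = false). Proof. by []. Qed.
Lemma ne02 : (((0 : 'I_4) == 2) = false). Proof. by []. Qed.
Lemma ne03 : (((0 : 'I_4) == 3) = false). Proof. by []. Qed.
Lemma ne10 : (((1 : 'I_4) == 0) = false). Proof. by []. Qed.
Lemma ne12 : (((1 : 'I_4) == 2) = false). Proof. by []. Qed.
Lemma ne13 : (((1 : 'I_4) == 3) = false). Proof. by []. Qed.
Lemma ne20 : (((2 : 'I_4) == 0) = false). Proof. by []. Qed.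
Lemma ne21 : (((2 : 'I_4) == 1) = false). Proof. by []. Qed.
Lemma ne23 : (((2 : 'I_4) == 3) = false). Proof. by []. Qed.
Lemma ne30 : (((3 : 'I_4) == 0) = false). Proof. by []. Qed.
Lemma ne31 : (((3 : 'I_4) == 1) = false). Proof. by []. Qed.
Lemma ne32 : (((3 : 'I_4) == 2) = false). Proof. by []. Qed.
Ltac evq := rewrite ?eqxx ?(ne01, ne02, ne03, ne10, ne12, ne13, ne20, ne21, ne23, ne30, ne31, ne32).
Lemma cJR (x : R) : conjc x%:C = x%:C.
Proof. by apply: cext; csimp; rewrite ?oppr0. Qed.
Lemma cJi : conjc 'i = - 'i :> C.
Proof. apply: cext; csimp; rewrite ?oppr0 //. Qed.
Lemma cJ1 : conjc 1 = 1 :> C.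
Proof. by apply: cext; csimp; rewrite ?oppr0. Qed.
Lemma cJ0 : conjc 0 = 0 :> C.
Proof. by apply: cext; csimp; rewrite ?oppr0. Qed.
Lemma sqri : 'i * 'i = -1 :> C.
Proof. by rewrite -expr2 sqr_i. Qed.
Lemma tR : (true%:R : C) = 1. Proof. by []. Qed.
Lemma fR : (false%:R : C) = 0. Proof. by []. Qed.
Section Four.
Variables c s : R.
Definition a1 := vec2 c%:C (1 * s%:C).
Definition b1 := vec2 s%:C (1 * c%:C).
Definition a2 := vec2 c%:C ('i * s%:C).
Definition b2 := vec2 s%:C (- 'i * c%:C).
Definition a3 := vec2 c%:C (-1 * s%:C).
Definition b3 := vec2 s%:C (-1 * c%:C).
Definition a4 := vec2 c%:C (- 'i * s%:C).
Definition b4 := vec2 s%:C ('i * c%:C).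

Lemma four_id :
  proj (kronv a1 b1) + proj (kronv a2 b2) + proj (kronv a3 b3) + proj (kronv a4 b4)
  = (8 * c^+2 * s^+2)%:C *: Phi1 R + (4 * c^+4)%:C *: proj (ket R 1)
    + (4 * s^+4)%:C *: proj (ket R 2).
Proof.
apply/matrixP => i j.
rewrite !addE !scaleE Phi1E !projE !ketE.
(elim/ord4P: i; elim/ord4P: j).
all: rewrite /a1 /a2 /a3 /a4 /b1 /b2 /b3 /b4 ?kron0 ?kron1 ?kron2 ?kron3 ?vec2_0 ?vec2_1.
all: evq.
all: rewrite ?tR ?fR ?numJ ?cJM ?cJN ?cJR ?cJi ?cJ1 ?cJ0.
all: field: sqri.
all: done.
Qed.
End Four.

Lemma unit_vec2 (x y : C) : conjc x * x + conjc y * y = 1 -> unit_vec (vec2 x y).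
Proof. by move=> H; rewrite unitE2 vec2_0 vec2_1. Qed.

Lemma quadE (k : 'I_4) (M : 'M[C]_4) : (adj (ket R k) *m M *m ket R k) 0 0 = M k k.
Proof.
rewrite mxE sum4 !mxE !sum4 !adjE !ketE.
elim/ord4P: k; evq; rewrite ?tR ?fR ?numJ ?cJ1 ?cJ0; ring.
Qed.

Lemma REsum3 (x y z : R) (A B Y : 'M[C]_4) i j :
  RE (((x%:C *: A) + (y%:C *: B) + (z%:C *: Y)) i j) =
  x * RE (A i j) + y * RE (B i j) + z * RE (Y i j).
Proof. by rewrite !addE !scaleE !RED !REmulC. Qed.

Lemma sigE (lam : R) i j : sigma_state lam i j =
  lam%:C * ((2^-1)%:C * (((i == 0)%:R + (i == 3)%:R) * ((j == 0)%:R + (j == 3)%:R))) +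
  (1 - lam)%:C * ((2^-1)%:C * (((i == 0)%:R - (i == 3)%:R) * ((j == 0)%:R - (j == 3)%:R))).
Proof.
transitivity ((lam%:C *: Phi1 R) i j + ((1-lam)%:C *: Phi2 R) i j); first exact: addE.
by congr (_ + _); [rewrite scaleE Phi1E | rewrite scaleE Phi2E].
Qed.

Lemma unit_a (x y : R) (w : C) : conjc w * w = 1 -> x ^+ 2 + y ^+ 2 = 1 ->
  unit_vec (vec2 x%:C (w * y%:C)).
Proof.
move=> hw hxy; apply: unit_vec2; rewrite cJM !cJR.
transitivity ((x ^+ 2 + y ^+ 2)%:C * 1 + (conjc w * w - 1) * (y ^+ 2)%:C).
  rewrite rmorphD !rmorphXn /=. ring.
by rewrite hxy hw subrr mul0r addr0 mulr1.
Qed.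

Lemma arith (lam A11 A22 B11 B22 A03 B03 Y00 Y11 Y22 Y33 Y03 : R) :
  2^-1 < lam -> lam < 1 ->
  0 = lam * A11 + (1 - lam) * B11 -> 0 = lam * A22 + (1 - lam) * B22 ->
  0 <= A11 -> 0 <= A22 -> 0 <= B11 -> 0 <= B22 ->
  (2 * lam - 1) / 2 = lam * A03 + (1 - lam) * B03 ->
  2 * B03 <= B11 + B22 -> - (2 * B03) <= B11 + B22 ->
  - (2 * Y03) <= Y11 + Y22 -> Y00 + Y11 + Y22 + Y33 = 1 -> 0 <= Y00 -> 0 <= Y33 ->
  let h := (2 * lam - 1) / 2 in
  2 * (8 * (1 - h) * h * A03 + 4 * (1 - h) ^+ 2 * B03 + 4 * h ^+ 2 * Y03) <=
  (8 * (1 - h) * h * A11 + 4 * (1 - h) ^+ 2 * B11 + 4 * h ^+ 2 * Y11) +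
  (8 * (1 - h) * h * A22 + 4 * (1 - h) ^+ 2 * B22 + 4 * h ^+ 2 * Y22) -> False.
Proof.
move=> hl1 hl2 a11 a22 pA11 pA22 pB11 pB22 a03 B1 B2 Y2 trY y00 y33 h HI.
have lp : 0 < lam by lra.
have l1 : 0 < 1 - lam by lra.
have hA11 : A11 = 0 by nra.
have hB11 : B11 = 0 by nra.
have hA22 : A22 = 0 by nra.
have hB22 : B22 = 0 by nra.
subst A11 B11 A22 B22.
have hB03 : B03 = 0 by lra.
subst B03.
have hpos : 0 < h by rewrite /h; lra.
have ha : lam * A03 = h by rewrite /h a03; ring.
have hY : Y11 + Y22 - 2 * Y03 <= 2 by lra.
have h2 : 0 <= h ^+ 2 by rewrite sqr_ge0.
have hh := ler_wpM2l h2 hY.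
have k1 : 16 * (1 - h) * h * A03 <= 8 * h ^+ 2 by lra.
have k2 : 16 * (1 - h) * h * h <= 8 * h ^+ 2 * lam.
  have := ler_wpM2l (ltW lp) k1. rewrite -ha. move=> kk. nra.
have k3 : 2 * (1 - h) <= lam.
  have h3 : 0 < 8 * h ^+ 2 by rewrite mulr_gt0 // exprn_gt0.
  nra.
move: k3; rewrite /h; lra.
Qed.

Lemma add4 (a1 b1 c1 a2 b2 c2 a3 b3 c3 a4 b4 c4 : R) :
  2 * a1 <= b1 + c1 -> 2 * a2 <= b2 + c2 -> 2 * a3 <= b3 + c3 -> 2 * a4 <= b4 + c4 ->
  2 * (a1 + a2 + a3 + a4) <= (b1 + b2 + b3 + b4) + (c1 + c2 + c3 + c4).
Proof. lra. Qed.

Arguments sep_props {Z}.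
Arguments add4 {a1 b1 c1 a2 b2 c2 a3 b3 c3 a4 b4 c4}.
Arguments arith {lam A11 A22 B11 B22 A03 B03 Y00 Y11 Y22 Y33 Y03}.
Arguments prod_state {a b}.
Arguments unit_a {x y w}.

Lemma main_thm (lam : R) :
  2^-1 < lam < 1 ->
  ~ (exists L : {linear 'M[C]_4 -> 'M[C]_4},
        non_entangling L /\ L (rho_state lam) = sigma_state lam).
Proof.
move=> /andP [hl1 hl2] [L [[HCP HTP HNE] HL]].
set h := (2 * lam - 1) / 2.
have hpos : 0 < h by rewrite /h; lra.
have h1 : 0 <= 1 - h by rewrite /h; lra.
set sv := Num.sqrt h; set cv := Num.sqrt (1 - h).
have hs : sv ^+ 2 = h by rewrite sqr_sqrtr // ltW.
have hc : cv ^+ 2 = 1 - h by rewrite sqr_sqrtr.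
have hcs : cv ^+ 2 + sv ^+ 2 = 1 by rewrite hs hc subrK.
have hcs' : sv ^+ 2 + cv ^+ 2 = 1 by rewrite addrC.
have s4 : sv ^+ 4 = h ^+ 2 by rewrite -hs -exprM.
have c4 : cv ^+ 4 = (1 - h) ^+ 2 by rewrite -hc -exprM.
have HS : sigma_state lam = lam%:C *: L (Phi1 R) + (1 - lam)%:C *: L (proj (ket R 1)).
  by rewrite -HL /rho_state linearD !linearZ.
have s11 : sigma_state lam 1 1 = 0.
  by rewrite sigE; evq; rewrite ?tR ?fR; ring.
have s22 : sigma_state lam 2 2 = 0.
  by rewrite sigE; evq; rewrite ?tR ?fR; ring.
have s03 : sigma_state lam 0 3 = ((2 * lam - 1) / 2)%:C.
  by rewrite sigE; evq; rewrite ?tR ?fR; field.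
have [dB sB] : density (proj (ket R 1)) /\ separable (proj (ket R 1)).
  by rewrite ket1E; apply: prod_state; [exact: unit10 | exact: unit01].
have [dY sY] : density (proj (ket R 2)) /\ separable (proj (ket R 2)).
  by rewrite ket2E; apply: prod_state; [exact: unit01 | exact: unit10].
have [Bd B1 B2] := sep_props (HNE _ dB sB).
have [Yd Y1 Y2] := sep_props (HNE _ dY sY).
have Apsd : forall k, 0 <= RE (L (Phi1 R) k k).
  move=> k.
  have HX : block_psd (fun _ _ : 'I_1 => Phi1 R).
    split; first by move=> _ _; have [-> _] := proj_psd _ (Phi1v R).
    by move=> v; rewrite !big_ord1; have [_ ->] := proj_psd _ (Phi1v R).
  have [_ H] := HCP 1%N _ HX.
  have := H (fun _ => ket R k); rewrite !big_ord1 quadE.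
  by rewrite lecE => /andP [_].
have trY : RE (L (proj (ket R 2)) 0 0) + RE (L (proj (ket R 2)) 1 1) + RE (L (proj (ket R 2)) 2 2) + RE (L (proj (ket R 2)) 3 3) = 1.
  have := HTP (proj (ket R 2)); case: dY => _ ->.
  rewrite /mxtrace sum4 => H; by rewrite -!RED H.
have w1 : conjc 1 * 1 = 1 :> C by rewrite cJ1 mulr1.
have wi : conjc 'i * 'i = 1 :> C by rewrite cJi mulNr sqri opprK.
have wm1 : conjc (-1) * (-1) = 1 :> C by rewrite cJN cJ1 mulrNN mulr1.
have wmi : conjc (- 'i) * (- 'i) = 1 :> C by rewrite cJN cJi opprK mulrN sqri opprK.
have P : forall (w w' : C), conjc w * w = 1 -> conjc w' * w' = 1 ->
    separable (L (proj (kronv (vec2 cv%:C (w * sv%:C)) (vec2 sv%:C (w' * cv%:C))))).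
  move=> w w' hw hw'.
  have [d sp] := prod_state (unit_a hw hcs) (unit_a hw' hcs').
  exact: HNE _ d sp.
have [_ I1 _] := sep_props (P _ _ w1 w1).
have [_ I2 _] := sep_props (P _ _ wi wmi).
have [_ I3 _] := sep_props (P _ _ wm1 wm1).
have [_ I4 _] := sep_props (P _ _ wmi wi).
have HZ := f_equal L (four_id cv sv).
rewrite !linearD !linearZZ /a1 /a2 /a3 /a4 /b1 /b2 /b3 /b4 in HZ.
set Z1 := L (proj (kronv (vec2 cv%:C (1 * sv%:C)) (vec2 sv%:C (1 * cv%:C)))) in HZ I1.
set Z2 := L (proj (kronv (vec2 cv%:C ('i * sv%:C)) (vec2 sv%:C (- 'i * cv%:C)))) in HZ I2.
set Z3 := L (proj (kronv (vec2 cv%:C (-1 * sv%:C)) (vec2 sv%:C (-1 * cv%:C)))) in HZ I3.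
set Z4 := L (proj (kronv (vec2 cv%:C (- 'i * sv%:C)) (vec2 sv%:C ('i * cv%:C)))) in HZ I4.
set A := L (Phi1 R) in HZ HS Apsd.
set B := L (proj (ket R 1)) in HZ HS Bd B1 B2.
set Y := L (proj (ket R 2)) in HZ Yd Y1 Y2 trY.
clearbody Z1 Z2 Z3 Z4 A B Y.
have sig : forall i j, RE (sigma_state lam i j) = lam * RE (A i j) + (1 - lam) * RE (B i j).
  by move=> i j; rewrite HS addE !scaleE RED !REmulC.
have ent : forall i j, RE (Z1 i j) + RE (Z2 i j) + RE (Z3 i j) + RE (Z4 i j) =
    8 * cv ^+ 2 * sv ^+ 2 * RE (A i j) + 4 * cv ^+ 4 * RE (B i j) + 4 * sv ^+ 4 * RE (Y i j).
  by move=> i j; rewrite -REsum3 -HZ !addE !RED.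
have a11 := sig 1 1; have a22 := sig 2 2; have a03 := sig 0 3.
rewrite s11 s22 s03 REC in a11 a22 a03.
have := Apsd 1; have := Apsd 2; have := Bd 1; have := Bd 2; have := Yd 0; have := Yd 3.
move=> y33 y00 b22 b11 a22p a11p.
have e03 := ent 0 3; have e11 := ent 1 1; have e22 := ent 2 2.
rewrite RE0 in a11 a22.
have HI := add4 I1 I2 I3 I4.
rewrite e03 e11 e22 c4 s4 hc hs in HI.
exact: (arith hl1 hl2 a11 a22 a11p a22p b11 b22 a03 B1 B2 Y2 trY y00 y33 HI).
Qed.
End S.

Theorem theorem4 (R : realType) (lam : R) :
  2^-1 < lam < 1 ->
  ~ (exists L : {linear 'M[R[i]]_4 -> 'M[R[i]]_4},
        non_entangling L /\ L (rho_state lam) = sigma_state lam).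
Proof. exact: main_thm. Qed.
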